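(* Let $\mathcal U\subseteq M(\mathbb C)^g$ be a non-commutative domain and let $f:\mathcal U\to M(\mathbb C)^{\tilde g}$ be a free map. Suppose $X\in\mathcal U(n)$, $Y\in\mathcal U(m)$, $\Gamma$ is an $n\times m$ complex matrix, and $f(X)\Gamma=\Gamma f(Y)$. If $f[n+m]^{-1}\big(\{f(X)\oplus f(Y)\}\big)$ has compact closure in $\mathcal U(n+m)$, then $X\Gamma=\Gamma Y$.
   Context: $M_n(\mathbb C)^g$ denotes $g$-tuples $X=(X_1,\dots,X_g)$ of $n\times n$ complex matrices; $X\Gamma=(X_1\Gamma,\dots,X_g\Gamma)$, $\Gamma Y=(\Gamma Y_1,\dots,\Gamma Y_g)$, $U^*XU$ entrywise, $X\oplus Y=(X_1\oplus Y_1,\dots,X_g\oplus Y_g)$ (block diagonal). A non-commutative set $\mathcal U\subseteq M(\mathbb C)^g$ is a sequence $(\mathcal U(n))_n$, $\mathcal U(n)\subseteq M_n(\mathbb C)^g$, closed under simultaneous unitary similarity and under direct sums; it is a non-commutative domain if each $\mathcal U(n)$ is open and connected. A free map $f:\mathcal U\to M(\mathbb C)^{\tilde g}$ is a sequence of functions $f[n]:\mathcal U(n)\to M_n(\mathbb C)^{\tilde g}$ such that whenever $X\in\mathcal U(n)$, $Y\in\mathcal U(m)$, $\Gamma\in\mathbb C^{n\times m}$ with $X\Gamma=\Gamma Y$, then $f[n](X)\Gamma=\Gamma f[m](Y)$; one writes $f(X)=f[n](X)$. *)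

(* Defs.v *)
(* The field of complex numbers is modelled as R[i] = complex R for an
   arbitrary R : realType (mathcomp-real-closed's `complex`), equipped with
   its standard (norm) topology; M_n(C) carries the matrix topology and
   M_n(C)^g = {ptws 'I_g -> 'M_n} carries the product (= Euclidean) topology. *)
From HB Require Import structures.
From mathcomp Require Import all_boot all_order all_algebra.
From mathcomp Require Import sesquilinear spectral.
From mathcomp Require Import all_classical all_reals all_analysis.
From mathcomp Require Import complex.
Import numFieldNormedType.Exports.

Set Implicit Arguments.
Unset Strict Implicit.
Unset Printing Implicit Defensive.

Import Order.TTheory GRing.Theory Num.Theory.
Local Open Scope ring_scope.
Local Open Scope classical_set_scope.
Local Open Scope sesquilinear_scope.

(* standard topology on C = R[i] (the one induced by its norm) *)
HB.instance Definition _ (R : realType) := PseudoPointedMetric.copy R[i] (R[i])^o.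

Definition tup (R : realType) (g n : nat) := {ptws 'I_g -> 'M[R[i]]_n}.

Definition intertwines (R : realType) (g n m : nat)
  (X : tup R g n) (G : 'M[R[i]]_(n, m)) (Y : tup R g m) : Prop :=
  forall i : 'I_g, X i *m G = G *m Y i.

Definition uconj (R : realType) (g n : nat) (V : 'M[R[i]]_n) (X : tup R g n)
  : tup R g n := fun i => V ^t* *m X i *m V.

Definition dsum (R : realType) (g n m : nat) (X : tup R g n) (Y : tup R g m)
  : tup R g (n + m) := fun i => block_mx (X i) 0 0 (Y i).

Definition nc_set (R : realType) (g : nat) (U : forall n, set (tup R g n)) : Prop :=
  (forall n (X : tup R g n) (V : 'M[R[i]]_n),
      U n X -> V \is unitarymx -> U n (uconj V X)) /\
  (forall n m (X : tup R g n) (Y : tup R g m),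
      U n X -> U m Y -> U (n + m)%N (dsum X Y)).

Definition nc_domain (R : realType) (g : nat) (U : forall n, set (tup R g n)) : Prop :=
  nc_set U /\ (forall n, open (U n) /\ connected (U n)).

(* free map U -> M(C)^g' : f[n] is only relevant on U(n) *)
Definition free_map (R : realType) (g g' : nat) (U : forall n, set (tup R g n))
  (f : forall n, tup R g n -> tup R g' n) : Prop :=
  forall n m (X : tup R g n) (Y : tup R g m) (G : 'M[R[i]]_(n, m)),
    U n X -> U m Y -> intertwines X G Y -> intertwines (f n X) G (f m Y).

(* Main.v *)
Require Import Defs.
From HB Require Import structures.
From mathcomp Require Import all_boot all_order all_algebra.
From mathcomp Require Import sesquilinear spectral.
From mathcomp Require Import all_classical all_reals all_analysis.
From mathcomp Require Import complex.
Import numFieldNormedType.Exports.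
Import Order.TTheory GRing.Theory Num.Theory.
Local Open Scope ring_scope.
Local Open Scope classical_set_scope.

Section Alg.
Variable K : comNzRingType.
Variables n m : nat.

Lemma block_int1 (A : 'M[K]_n) (B : 'M[K]_(n,m)) (D : 'M[K]_m) :
  block_mx A B 0 D *m col_mx 1%:M 0 = col_mx 1%:M 0 *m A.
Proof.
by rewrite mul_block_col mul_col_mx !mulmx1 mul1mx !mulmx0 !mul0mx !addr0.
Qed.

Lemma block_int2 (c : K) (A : 'M[K]_n) (G : 'M[K]_(n,m)) (D : 'M[K]_m) :
  block_mx A (c *: (G *m D - A *m G)) 0 D *m col_mx (c *: G) 1%:M
  = col_mx (c *: G) 1%:M *m D.
Proof.
rewrite mul_block_col mul_col_mx !mulmx1 mul1mx mul0mx add0r.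
congr col_mx. rewrite -scalemxAl -scalemxAr -scalerDr.
by rewrite addrC subrK.
Qed.

Lemma block_recover (F : 'M[K]_(n + m)) (A : 'M[K]_n) (D : 'M[K]_m)
   (c : K) (G : 'M[K]_(n,m)) :
  A *m G = G *m D ->
  F *m col_mx 1%:M 0 = col_mx 1%:M 0 *m A ->
  F *m col_mx (c *: G) 1%:M = col_mx (c *: G) 1%:M *m D ->
  F = block_mx A 0 0 D.
Proof.
move=> hG h1 h2.
rewrite -[F]submxK in h1 h2 *.
move: h1; rewrite mul_block_col mul_col_mx !mulmx1 !mulmx0 mul1mx mul0mx !addr0.
move/eq_col_mx => [e1 e2]; rewrite e1 e2 in h2 *.
move: h2; rewrite mul_block_col mul_col_mx !mulmx1 mul1mx mul0mx add0r.
move/eq_col_mx => [h3 ->].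
congr block_mx.
move: h3; rewrite -scalemxAl -scalemxAr hG => /eqP.
by rewrite -subr_eq0 addrC addKr => /eqP.
Qed.
End Alg.

Section T.
Local Open Scope complex_scope.
Variable R : realType.
Lemma cont_realc : continuous (fun t : R => t%:C : R[i]).
Proof.
move=> t A /nbhs_ballP [e e0 He]; apply/nbhs_ballP.
move: (e0) => /=; rewrite (@ltcE R 0 e) => /andP[/eqP eIm eRe].
exists (complex.Re e) => // s /= hs; apply: He => /=.
have -> : e = (complex.Re e)%:C by case: e eIm {e0 eRe hs} => a b /= ->.
rewrite /ball /= in hs *. rewrite -(rmorphB (real_complex R)) normc_def /= expr0n /= addr0 sqrtr_sqr.
by rewrite ltcR.
Qed.
Lemma cont_aff (c0 c1 : R[i]) : continuous (fun s : R => c0 + s%:C * c1).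
Proof.
move=> t. have := (@continuousD _ R[i]^o R (fun=> c0) (fun s : R => s%:C * c1) t). apply.
  exact: cst_continuous.
apply: continuousM; first exact: cont_realc.
exact: cst_continuous.
Qed.
Lemma Re_cont : continuous (fun z : R[i] => complex.Re z).
Proof.
move=> z A /nbhs_ballP [e e0 He]; apply/nbhs_ballP.
exists e%:C; first by rewrite /= ltcR.
move=> w /= hw; apply: He; rewrite /ball /= in hw *.
have := normc_ge_Re (z - w).
have -> : complex.Re (z - w) = complex.Re z - complex.Re w by case: z w {hw} => ? ? [] ? ?.
move=> /le_lt_trans /(_ hw). by rewrite ltcR.
Qed.

Lemma cont_mx (a b : nat) (F : R -> 'M[R[i]]_(a,b)) :
  (forall r c, continuous (fun s => F s r c)) -> continuous F.
Proof.
move=> h t A hA. rewrite /nbhs /= in hA. case: hA => P /= hP hPA.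
have : \forall s \near t, forall rc : 'I_a * 'I_b, P rc.1 rc.2 (F s rc.1 rc.2).
  apply: (@filter_forall R ('I_a * 'I_b)%type (fun rc s => P rc.1 rc.2 (F s rc.1 rc.2)) (nbhs t) _) => -[r c] /=.
  exact: (h r c t _ (hP r c)).
apply: filterS => s hs; apply: hPA => r c; exact: (hs (r, c)).
Qed.

Lemma cont_ptws (gg a : nat) (F : R -> tup R gg a) :
  (forall i, continuous (fun s => F s i)) -> continuous F.
Proof.
move=> h t. apply/(@pointwise_cvgP (discrete_topology 'I_gg) 'M[R[i]]_a (F @ t) (F t) (fmap_filter _ _)) => i. exact: h.
Qed.

Lemma proj_cont (gg a : nat) (i : 'I_gg) (r c : 'I_a) :
  continuous (fun h : tup R gg a => h i r c).
Proof.
move=> h.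
have h1 : (fun g : tup R gg a => g i) @ nbhs h --> h i.
  by move/(@pointwise_cvgP (discrete_topology 'I_gg) 'M[R[i]]_a (nbhs h) h (nbhs_filter h)) : (@cvg_id _ (nbhs h)); apply.
exact: (@continuous_comp _ _ _ (fun g : tup R gg a => g i) (fun M : 'M[R[i]]_a => M r c) h h1 (@coord_continuous R[i] a a r c (h i))).
Qed.
Lemma Re_realc_mul (s : R) (x : R[i]) : complex.Re (s%:C * x) = s * complex.Re x.
Proof. by case: x => a b /=; rewrite mul0r subr0. Qed.

Lemma line_bounded (K : set R[i]) (d : R[i]) : compact K ->
  (forall s : R, K (s%:C * d)) -> forall w, complex.Re (d * w) = 0.
Proof.
move=> cK hK w.
pose phi := fun z : R[i] => complex.Re (z * w).
have cphi : continuous phi.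
  move=> z; apply: (@continuous_comp _ _ _ (fun z : R[i] => z * w) (fun z => complex.Re z)).
    by apply: continuousM; [exact: cvg_id | exact: cst_continuous].
  exact: Re_cont.
have : compact (phi @` K) by apply: continuous_compact => //; exact: continuous_subspaceT.
move/compact_bounded => [M0 [_ /(_ (M0 + 1)) hM]].
have {hM} hM : forall x, (phi @` K) x -> `|x| <= M0 + 1.
  by apply: hM; rewrite ltrDl.
apply/eqP; apply: contraT => nz.
have := hM (phi (((M0 + 2) / complex.Re (d * w))%:C * d)) (imageP _ (hK _)).
rewrite /phi -mulrA Re_realc_mul divfK //.
move=> /(le_trans (ler_norm _)). rewrite lerD2l. by rewrite leNgt ltr1n.
Qed.
End T.

Section Main.
Local Open Scope complex_scope.
Lemma main_aux (R : realType) (g g' : nat)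
  (U : forall n, set (tup R g n)) (f : forall n, tup R g n -> tup R g' n) :
  nc_domain U -> free_map U f ->
  forall (n m : nat) (X : tup R g n) (Y : tup R g m) (G : 'M[R[i]]_(n, m)),
    U n X -> U m Y ->
    intertwines (f n X) G (f m Y) ->
    compact (closure [set Z | U (n + m)%N Z /\ f (n + m)%N Z = dsum (f n X) (f m Y)]) ->
    closure [set Z | U (n + m)%N Z /\ f (n + m)%N Z = dsum (f n X) (f m Y)] `<=` U (n + m)%N ->
    intertwines X G Y.
Proof.
move=> [[_ Udsum] Uoc] fm n m X Y G UX UY hf.
set S := [set Z | _ /\ _] => cS sU.
pose D i := G *m Y i - X i *m G.
pose Z : R -> tup R g (n + m) := fun s i => block_mx (X i) (s%:C *: D i) 0 (Y i).
have ZS : forall s, U (n + m)%N (Z s) -> S (Z s).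
  move=> s Us; split => //; apply: funext => i.
  apply: (@block_recover _ n m _ _ _ (s%:C) G (hf i)).
  - apply: (fm (n + m)%N n (Z s) X (col_mx 1%:M 0) Us UX) => j.
    exact: block_int1.
  - apply: (fm (n + m)%N m (Z s) Y (col_mx (s%:C *: G) 1%:M) Us UY) => j.
    exact: block_int2.
have Zcont : continuous Z.
  apply: cont_ptws => i; apply: cont_mx => r c.
  have -> : (fun s => Z s i r c) = (fun s : R => block_mx (X i) 0 0 (Y i) r c
        + s%:C * block_mx 0 (D i) 0 0 r c).
    apply: funext => s; rewrite /Z.
    have -> : block_mx (X i) (s%:C *: D i) 0 (Y i) =
       block_mx (X i) 0 0 (Y i) + s%:C *: block_mx 0 (D i) 0 0.
      by rewrite scale_block_mx add_block_mx !scaler0 !addr0 add0r.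
    by rewrite !mxE.
  exact: cont_aff.
have Aeq : Z @^-1` U (n + m)%N = Z @^-1` closure S.
  apply/seteqP; split => s /= hs; first exact: subset_closure (ZS s hs).
  exact: sU.
have conn : connected [set: R] by apply/connected_intervalP.
have Aall : Z @^-1` U (n + m)%N = setT.
  apply: conn.
  - exists 0; rewrite /= /Z.
    have -> : (fun i => block_mx (X i) ((0:R)%:C *: D i) 0 (Y i)) = dsum X Y.
      by apply: funext => i; rewrite rmorph0 scale0r.
    exact: Udsum.
  - exists (Z @^-1` U (n + m)%N); last by rewrite setTI.
    apply: open_comp; first by move=> x _; exact: Zcont.
    exact: (Uoc _).1.
  - exists (Z @^-1` closure S); last by rewrite setTI.
    apply: preimage_closed; first by move=> x _; exact: Zcont.
    exact: closed_closure.
have inS : forall s, closure S (Z s).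
  by move=> s; rewrite -[_ (Z s)]/((Z @^-1` closure S) s) -Aeq Aall.
move=> i; apply/matrixP => r c.
pose phi := fun h : tup R g (n + m) => h i (lshift m r) (rshift n c).
have cK : compact (phi @` closure S).
  by apply: continuous_compact => //; apply: continuous_subspaceT; exact: proj_cont.
have hK : forall s : R, (phi @` closure S) (s%:C * D i r c).
  move=> s; exists (Z s) => //; rewrite /phi /Z.
  have := congr1 (fun M : 'M[R[i]]_(n,m) => M r c) (block_mxKur (X i) (s%:C *: D i) 0 (Y i)).
  by rewrite /= !mxE => ->.
have h1 := @line_bounded R _ _ cK hK 1.
have h2 := @line_bounded R _ _ cK hK 'i.
have : D i r c = 0.
  move: h1 h2; rewrite mulr1; case: (D i r c) => a b /= -> .
  rewrite !mul0r !mulr1 => /eqP; rewrite add0r oppr_eq0 => /eqP ->. by [].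
by rewrite /D !mxE => /eqP; rewrite subr_eq0 => /eqP ->.
Qed.
End Main.

Theorem proposition3p3 (R : realType) (g g' : nat)
  (U : forall n, set (tup R g n)) (f : forall n, tup R g n -> tup R g' n) :
  nc_domain U -> free_map U f ->
  forall (n m : nat) (X : tup R g n) (Y : tup R g m) (G : 'M[R[i]]_(n, m)),
    U n X -> U m Y ->
    intertwines (f n X) G (f m Y) ->
    (let S := [set Z | U (n + m)%N Z /\ f (n + m)%N Z = dsum (f n X) (f m Y)] in
     compact (closure S) /\ closure S `<=` U (n + m)%N) ->
    intertwines X G Y.
Proof.
move=> hU hf n m X Y G UX UY hfi H.
exact: (@main_aux R g g' U f hU hf n m X Y G UX UY hfi (proj1 H) (proj2 H)).
Qed.
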